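(* Let $\mathfrak{n}$ be a finite-dimensional Lie algebra over $\mathbb{Q}$ and let $f\in\mathrm{Aut}\,\mathfrak{n}$. There is an $f$-invariant $\mathbb{Z}$-grading $\mathfrak{n}^{\overline{\mathbb{Q}}}=\oplus_{k\in\mathbb{Z}}\mathfrak{n}^{\overline{\mathbb{Q}}}_k$ of $\mathfrak{n}^{\overline{\mathbb{Q}}}=\overline{\mathbb{Q}}\otimes\mathfrak{n}$ such that all eigenvalues of $f$ on $\mathfrak{n}^{\overline{\mathbb{Q}}}_0$ are roots of unity. In particular, if no eigenvalue of $f$ is a root of unity, then $\mathfrak{n}^{\overline{\mathbb{Q}}}$ admits a very special grading.
   Context: A grading of a Lie algebra $\mathfrak{m}$ is a decomposition $\mathfrak{m}=\oplus_{k\in\mathbb{Z}}\mathfrak{m}_k$ with $[\mathfrak{m}_k,\mathfrak{m}_l]\subset\mathfrak{m}_{k+l}$; it is very special if $\mathfrak{m}_0=0$. Eigenvalues are taken in $\overline{\mathbb{Q}}$. *)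

(* Defs.v *)
From HB Require Import structures.
From mathcomp Require Import all_boot all_order all_algebra all_field.
Set Implicit Arguments. Unset Strict Implicit. Unset Printing Implicit Defensive.
Import Order.TTheory GRing.Theory Num.Theory.
Local Open Scope ring_scope.

(* A finite-dimensional Lie algebra over Q with basis e_0..e_(n-1) is given by
   its structure constants: c i j = [e_i, e_j] in Q^n (row vectors).
   The bracket on F^n = F (x)_Q Q^n (F a field, Q -> F via ratr) is the
   bilinear extension.  For F = rat this is the Lie algebra itself, for
   F = algC (the algebraic closure of Q) it is the scalar extension. *)
Definition lbr (F : fieldType) (n : nat) (c : 'I_n -> 'I_n -> 'rV[rat]_n)
  (u v : 'rV[F]_n) : 'rV[F]_n :=
  \sum_(i < n) \sum_(j < n) (u 0 i * v 0 j) *: map_mx ratr (c i j).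

Definition is_lie (n : nat) (c : 'I_n -> 'I_n -> 'rV[rat]_n) : Prop :=
  (forall u : 'rV[rat]_n, lbr c u u = 0) /\
  (forall u v w : 'rV[rat]_n,
     lbr c u (lbr c v w) + lbr c v (lbr c w u) + lbr c w (lbr c u v) = 0).

(* f (acting on row vectors by right multiplication) is a Lie algebra
   automorphism of (Q^n, c). *)
Definition is_lie_aut (n : nat) (c : 'I_n -> 'I_n -> 'rV[rat]_n)
  (f : 'M[rat]_n) : Prop :=
  f \in unitmx /\
  forall u v : 'rV[rat]_n, lbr c u v *m f = lbr c (u *m f) (v *m f).

Definition is_grading (F : fieldType) (n : nat) (c : 'I_n -> 'I_n -> 'rV[rat]_n)
  (V : int -> 'M[F]_n) : Prop :=
  exists N : nat,
    (forall k : int, (N%:Z < `|k|)%R -> V k = 0) /\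
    (\sum_(i < (N + N).+1) V (i%:Z - N%:Z) == 1%:M)%MS /\
    mxdirect (\sum_(i < (N + N).+1) V (i%:Z - N%:Z)) /\
    (forall (k l : int) (u v : 'rV[F]_n),
        (u <= V k)%MS -> (v <= V l)%MS -> (lbr c u v <= V (k + l)%R)%MS).

Definition grading_invariant (F : fieldType) (n : nat) (V : int -> 'M[F]_n)
  (g : 'M[F]_n) : Prop :=
  forall k : int, (V k *m g <= V k)%MS.

Definition is_root_of_unity (F : fieldType) (a : F) : Prop :=
  exists m : nat, (0 < m)%N /\ a ^+ m = 1.

Definition very_special (F : fieldType) (n : nat) (V : int -> 'M[F]_n) : Prop :=
  V 0 = 0.

(* Main.v *)
Require Import Defs.
From HB Require Import structures.
From mathcomp Require Import all_boot all_order all_algebra all_field.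
From mathcomp Require Import zify.
Set Implicit Arguments. Unset Strict Implicit. Unset Printing Implicit Defensive.
Import Order.TTheory GRing.Theory Num.Theory.
Local Open Scope ring_scope.

Lemma scale_int (I : finType) (x : I -> rat) :
  exists d : int, 0 < d /\ exists z : I -> int, forall i, (z i)%:~R = x i * d%:~R.
Proof.
exists (\prod_i denq (x i)); split.
  by apply: prodr_gt0 => i _; apply: denq_gt0.
exists (fun i => numq (x i) * \prod_(j | j != i) denq (x j)) => i.
rewrite (intrM rat) numqE [in RHS](bigD1 i) //= (intrM rat) mulrA.
by [].
Qed.

Lemma nonroot_nat (p : {poly rat}) : p != 0 -> exists k : nat, ~~ root p k%:R.
Proof.
move=> p0.
have : ~~ all (root p) [seq k%:R | k <- iota 0 (size p)].
  apply/negP => Hall.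
  have := max_poly_roots p0 Hall.
  rewrite map_inj_uniq ?iota_uniq; last by move=> a b /eqP; rewrite eqr_nat => /eqP.
  by rewrite size_map size_iota ltnn => /(_ isT).
case/allPn => y /mapP [k _ ->] Hk; by exists k.
Qed.

Lemma avoid_rows r m (K : 'M[rat]_(r, m)) :
  exists x : 'cV[rat]_m, forall i, row i K != 0 -> (K *m x) i 0 != 0.
Proof.
case: m K => [|m] K.
  by exists 0 => i; rewrite thinmx0 eqxx.
pose p i := \poly_(j < m.+1) K i (inord j).
have pnz i : row i K != 0 -> p i != 0.
  apply: contra => /eqP pi0; apply/eqP/rowP => j; rewrite !mxE.
  by have := coef_poly m.+1 (fun j => K i (inord j)) j; rewrite -/(p i) pi0 coef0 ltn_ord inord_val => <-.
pose P := \prod_(i | row i K != 0) p i.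
have P0 : P != 0 by apply/prodf_neq0 => i; apply: pnz.
have [k Hk] := nonroot_nat P0.
exists (\col_j (k%:R ^+ j)) => i Hi.
have -> : (K *m \col_j (k%:R ^+ j)) i 0 = (p i).[k%:R].
  by rewrite horner_poly mxE; apply: eq_bigr => j _; rewrite mxE inord_val.
move: Hk; rewrite /root /P horner_prod.
by move/prodf_neq0 => /(_ i Hi).
Qed.


Section Ev.
Variables (r : nat) (lam : 'I_r -> algC).
Hypothesis lam0 : forall j, lam j != 0.

Definition ev (m : 'rV[int]_r) := \prod_j lam j ^ (m 0 j).

Lemma prodXz (I : Type) (s : seq I) (F : I -> algC) (z : int) :
  (\prod_(i <- s) F i) ^ z = \prod_(i <- s) (F i ^ z).
Proof.
case: z => n /=; first by rewrite prodrXl.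
by rewrite NegzE -exprnN -prodrXl -prodfV; apply: eq_bigr => i _; rewrite exprnN.
Qed.

Lemma ev_add m1 m2 : ev (m1 + m2) = ev m1 * ev m2.
Proof.
rewrite /ev -big_split; apply: eq_bigr => j _.
by rewrite mxE exprzDr // unitfE.
Qed.

Lemma ev0 : ev 0 = 1.
Proof. by rewrite /ev big1 // => j _; rewrite mxE expr0z. Qed.

Lemma ev_scale (z : int) m : ev (z *: m) = ev m ^ z.
Proof.
rewrite /ev prodXz; apply: eq_bigr => j _.
by rewrite mxE exprz_exp mulrC.
Qed.

Lemma ev_sum (I : finType) (v : I -> 'rV[int]_r) :
  ev (\sum_k v k) = \prod_k ev (v k).
Proof. exact: (big_morph _ ev_add ev0). Qed.

Lemma ev_delta i : ev (delta_mx 0 i) = lam i.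
Proof.
rewrite /ev (bigD1 i) //= big1 ?mulr1 => [|j ji]; first by rewrite mxE !eqxx.
by rewrite mxE (negPf ji) andbF expr0z.
Qed.
End Ev.

Lemma phi_exists r (lam : 'I_r -> algC) (T : finType) (g : T -> 'rV[int]_r) :
  (forall j, lam j != 0) -> (forall t, ev lam (g t) = 1) ->
  exists phi : 'I_r -> int,
    (forall t, \sum_j g t 0 j * phi j = 0) /\
    (forall i, phi i = 0 -> is_root_of_unity (lam i)).
Proof.
move=> lam0 gev.
pose Rm : 'M[rat]_(#|T|, r) := \matrix_(k, j) (g (enum_val k) 0 j)%:~R.
pose K := cokermx Rm.
have [x Hx] := avoid_rows K.
pose psi := K *m x.
have [d [d0 [phi Hphi]]] := scale_int (fun i => psi i 0).
exists phi; split.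
  move=> t; apply: (@intr_inj rat); rewrite rmorph_sum rmorph0 /=.
  have : (row (enum_rank t) Rm) *m psi = 0.
    by rewrite /psi mulmxA -row_mul mulmx_coker row0 mul0mx.
  move/matrixP => /(_ 0 0); rewrite [X in X = _]mxE [X in _ = X]mxE => H.
  have E j : ((g t 0 j * phi j)%:~R : rat) = row (enum_rank t) Rm 0 j * psi j 0 * d%:~R.
    by rewrite (intrM rat) Hphi !mxE enum_rankK mulrA.
  by rewrite (eq_bigr _ (fun j _ => E j)) -mulr_suml H mul0r.
move=> i phi0.
have psi0 : psi i 0 = 0.
  have := Hphi i; rewrite phi0 rmorph0 => /esym /eqP.
  by rewrite mulf_eq0 intr_eq0 (gt_eqF d0) orbF => /eqP.
have : ~~ (row i K != 0) by apply/negP => /Hx; rewrite psi0 eqxx.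
rewrite negbK rowE /K -submxE => /submxP [w Hw].
have [d2 [d20 [z Hz]]] := scale_int (fun k => w 0 k).
have Hint : (d2 *: delta_mx 0 i : 'rV[int]_r) = \sum_k z k *: g (enum_val k).
  apply/rowP => j; apply: (@intr_inj rat).
  rewrite summxE !mxE (intrM rat) rmorph_sum /=.
  have := congr1 (fun M : 'rV[rat]_r => M 0 j) Hw; rewrite /= !mxE eqxx /= => HH.
  rewrite rmorph_nat HH mulr_sumr; apply: eq_bigr => k _.
  rewrite !mxE (intrM rat) Hz.
  by rewrite mulrCA mulrA.
have := congr1 (ev lam) Hint.
rewrite ev_scale // ev_delta ev_sum // big1 => [|k _]; last first.
  by rewrite ev_scale // gev exp1rz.
case: d2 d20 {Hz Hint} => [n|n] //= n0 H.
by exists n; split.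
Qed.

Section Br.
Variables (F : fieldType) (n : nat) (c : 'I_n -> 'I_n -> 'rV[rat]_n).
Local Notation C i j := (map_mx (ratr : rat -> F) (c i j)).
Local Notation L := (@lbr F n c).

Definition Ml (v : 'rV[F]_n) : 'M[F]_n := \matrix_(i, k) (\sum_j v 0 j * C i j 0 k).
Definition Mr (u : 'rV[F]_n) : 'M[F]_n := \matrix_(j, k) (\sum_i u 0 i * C i j 0 k).

Lemma lbrEl u v : L u v = u *m Ml v.
Proof.
apply/rowP => k; rewrite /lbr summxE !mxE; apply: eq_bigr => i _.
rewrite summxE mxE mulr_sumr; apply: eq_bigr => j _.
by rewrite mxE mulrA.
Qed.

Lemma lbrEr u v : L u v = v *m Mr u.
Proof.
apply/rowP => k; rewrite /lbr summxE.
under eq_bigr do rewrite summxE.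
rewrite mxE exchange_big; apply: eq_bigr => j _.
rewrite mxE mulr_sumr; apply: eq_bigr => i _.
by rewrite !mxE mulrA [u 0 i * _]mulrC.
Qed.

Lemma lbr0l v : L 0 v = 0. Proof. by rewrite lbrEl mul0mx. Qed.
Lemma lbr0r u : L u 0 = 0. Proof. by rewrite lbrEr mul0mx. Qed.
Lemma lbrDl u1 u2 v : L (u1 + u2) v = L u1 v + L u2 v.
Proof. by rewrite !lbrEl mulmxDl. Qed.
Lemma lbrDr u v1 v2 : L u (v1 + v2) = L u v1 + L u v2.
Proof. by rewrite !lbrEr mulmxDl. Qed.
Lemma lbrZl a u v : L (a *: u) v = a *: L u v.
Proof. by rewrite !lbrEl scalemxAl. Qed.
Lemma lbrZr a u v : L u (a *: v) = a *: L u v.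
Proof. by rewrite !lbrEr scalemxAl. Qed.
Lemma lbrBl u1 u2 v : L (u1 - u2) v = L u1 v - L u2 v.
Proof. by rewrite !lbrEl mulmxBl. Qed.
Lemma lbrBr u v1 v2 : L u (v1 - v2) = L u v1 - L u v2.
Proof. by rewrite !lbrEr mulmxBl. Qed.
Lemma lbr_suml (I : Type) (s : seq I) (P : pred I) (u : I -> 'rV_n) v :
  L (\sum_(i <- s | P i) u i) v = \sum_(i <- s | P i) L (u i) v.
Proof. by rewrite lbrEl mulmx_suml; apply: eq_bigr => i _; rewrite lbrEl. Qed.
Lemma lbr_sumr (I : Type) (s : seq I) (P : pred I) u (v : I -> 'rV_n) :
  L u (\sum_(i <- s | P i) v i) = \sum_(i <- s | P i) L u (v i).
Proof. by rewrite lbrEr mulmx_suml; apply: eq_bigr => i _; rewrite lbrEr. Qed.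

Lemma lbr_delta i j : L (delta_mx 0 i) (delta_mx 0 j) = C i j.
Proof.
rewrite /lbr (bigD1 i) //= [X in _ + X]big1 => [|i' Hi']; last first.
  by apply: big1 => j' _; rewrite mxE (negPf Hi') andbF mul0r scale0r.
rewrite addr0 (bigD1 j) //= [X in _ + X]big1 => [|j' Hj']; last first.
  by rewrite [delta_mx 0 j 0 j']mxE (negPf Hj') andbF mulr0 scale0r.
by rewrite addr0 !mxE !eqxx mulr1 scale1r.
Qed.
End Br.

Lemma lbr_map (F : numFieldType) n c (a b : 'rV[rat]_n) :
  lbr c (map_mx (ratr : rat -> F) a) (map_mx ratr b) = map_mx ratr (lbr c a b).
Proof.
rewrite /lbr map_mx_sum; apply: eq_bigr => i _; rewrite map_mx_sum; apply: eq_bigr => j _.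
rewrite map_mxZ rmorphM /= !mxE; congr (_ *: _).
by apply/matrixP => x y; rewrite !mxE fmorph_rat.
Qed.

Lemma aut_ext (F : numFieldType) n c (f : 'M[rat]_n) : is_lie_aut c f ->
  forall u v : 'rV[F]_n, lbr c u v *m map_mx ratr f =
    lbr c (u *m map_mx ratr f) (v *m map_mx ratr f).
Proof.
move=> [_ Hf] u v; set Fm := map_mx ratr f.
have key i j : map_mx (ratr : rat -> F) (c i j) *m Fm =
    lbr c (delta_mx 0 i *m Fm) (delta_mx 0 j *m Fm).
  have := Hf (delta_mx 0 i) (delta_mx 0 j).
  rewrite lbr_delta => /(congr1 (map_mx (ratr : rat -> F))).
  rewrite map_mxM -lbr_map !map_mxM !map_delta_mx => <-.
  by congr (_ *m _); apply/matrixP => x y; rewrite !mxE fmorph_rat.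
rewrite [u in RHS]row_sum_delta [v in RHS]row_sum_delta !mulmx_suml lbr_suml.
apply: eq_bigr => i _.
rewrite mulmx_suml lbr_sumr; apply: eq_bigr => j _.
by rewrite -!scalemxAl lbrZl lbrZr -key scalerA scalemxAl.
Qed.

Section Gen.
Variables (K : numFieldType) (n' : nat) (c : 'I_n'.+1 -> 'I_n'.+1 -> 'rV[rat]_n'.+1).
Local Notation n := n'.+1.
Variable A : 'M[K]_n.
Hypothesis HA : forall u v, lbr c u v *m A = lbr c (u *m A) (v *m A).

Lemma lbr_step (l m : K) u v :
  lbr c u v *m (A - (l * m)%:M) =
  lbr c (u *m (A - l%:M)) (v *m A) + l *: lbr c u (v *m (A - m%:M)).
Proof.
rewrite !mulmxBr HA !mul_mx_scalar lbrBl lbrBr lbrZl !lbrZr scalerBr scalerA.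
by rewrite addrA subrK.
Qed.

Lemma commA_X (a : K) k : comm_mx A ((A - a%:M) ^+ k).
Proof.
apply: commrX; rewrite /GRing.comm -!mulmxE mulmxBr mulmxBl !mul_mx_scalar !mul_scalar_mx.
by [].
Qed.

Lemma gen_lbr (l m : K) s : forall a b u v, (a + b = s)%N ->
  u *m (A - l%:M) ^+ a = 0 -> v *m (A - m%:M) ^+ b = 0 ->
  lbr c u v *m (A - (l * m)%:M) ^+ s = 0.
Proof.
elim: s => [|s IH] a b u v.
  case: a => // [] [] // _; rewrite !expr0 !mulmx1 => -> _.
  by rewrite lbr0l.
case: a => [|a] .
  by rewrite expr0 mulmx1 => _ -> _; rewrite lbr0l mul0mx.
case: b => [|b] .
  by rewrite expr0 mulmx1 => _ _ ->; rewrite lbr0r mul0mx.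
move=> Hs Hu Hv.
rewrite exprS -mulmxE mulmxA lbr_step mulmxDl -scalemxAl.
rewrite (IH a b.+1) ?(IH a.+1 b) ?scaler0 ?addr0 //.
- by move: Hs; rewrite addnS => -[].
- by rewrite -mulmxA mulmxE -exprS.
- by move: Hs; rewrite addSn => -[].
- by rewrite -mulmxA mulmxE -exprS.
- by rewrite -mulmxA (commA_X m b.+1) mulmxA Hv mul0mx.
Qed.
End Gen.

Section Spec.
Variables (n' : nat) (A : 'M[algC]_n'.+1).
Local Notation n := n'.+1.

Definition rts : seq algC := sval (closed_field_poly_normal (char_poly A)).

Lemma charE : char_poly A = \prod_(z <- rts) ('X - z%:P).
Proof.
rewrite /rts; case: closed_field_poly_normal => s /= ->.
by rewrite (monicP (char_poly_monic A)) scale1r.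
Qed.

Lemma size_rts : size rts = n.
Proof.
by have := size_char_poly A; rewrite charE size_prod_XsubC => -[].
Qed.

Definition evs := undup rts.
Definition r := size evs.
Definition lam (j : 'I_r) : algC := nth 0 evs j.

Lemma lam_inj : injective lam.
Proof.
move=> i j /eqP; rewrite /lam nth_uniq ?undup_uniq ?ltn_ord //.
by move/eqP/val_inj.
Qed.

Lemma hornerXa (a : algC) k : horner_mx A (('X - a%:P) ^+ k) = (A - a%:M) ^+ k.
Proof. by rewrite rmorphXn /= rmorphB /= horner_mx_X horner_mx_C. Qed.

Lemma eig_lam (a : algC) : eigenvalue A a -> exists j, lam j = a.
Proof.
rewrite eigenvalue_root_char charE root_prod_XsubC -mem_undup => Ha.
have Hi : (index a evs < r)%N by rewrite index_mem.
by exists (Ordinal Hi); rewrite /lam /= nth_index.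
Qed.

Lemma lam_eig j : eigenvalue A (lam j).
Proof.
by rewrite eigenvalue_root_char charE root_prod_XsubC -mem_undup /lam mem_nth.
Qed.

Lemma stab (a : algC) N : (kermx ((A - a%:M) ^+ N) <= geigenspace A a)%MS.
Proof.
rewrite geigenspaceE.
set q := \prod_(z <- rts | z != a) ('X - z%:P).
have cop : coprimep (('X - a%:P) ^+ N) q.
  apply: coprimep_expl; rewrite /q.
  apply: (big_ind (fun p => coprimep ('X - a%:P) p)) => [|x y|z za]; first exact: coprimep1.
    by rewrite coprimepMr => -> ->.
  by rewrite coprimep_XsubC root_XsubC.
have dv : char_poly A %| ('X - a%:P) ^+ n * q.
  rewrite charE (bigID (fun z => z == a)) /=.
  apply: dvdp_mul; last exact: dvdpp.
  rewrite (eq_bigr (fun _ => 'X - a%:P)) => [|y /eqP -> //].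
  rewrite big_const_seq iter_mulr_1; apply: dvdp_exp2l.
  by rewrite -size_rts count_size.
move: cop => /Bezout_eq1_coprimepP [[u1 u2] /= Huv].
apply/sub_kermxP.
set W := kermx _.
have W0 : W *m (A - a%:M) ^+ N = 0 := mulmx_ker _.
have -> : W = W *m horner_mx A u2 *m horner_mx A q.
  transitivity (W *m horner_mx A (('X - a%:P) ^+ N * u1 + u2 * q)).
    by rewrite mulrC Huv rmorph1 mulmx1.
  by rewrite rmorphD !rmorphM /= mulmxDr hornerXa -!mulmxE !mulmxA W0 mul0mx add0r.
rewrite -(mulmxA (W *m _)) -(hornerXa a n) mulmxE -rmorphM mulrC.
case/dvdpP: dv => k ->.
by rewrite rmorphM /= Cayley_Hamilton mulr0 mulr0.
Qed.

Lemma full : (1%:M <= \sum_(j < r) geigenspace A (lam j))%MS.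
Proof.
have cop : {in predT &, forall i j : 'I_r, j != i ->
    coprimep (('X - (lam i)%:P) ^+ n) (('X - (lam j)%:P) ^+ n)}.
  move=> i j _ _ ji; apply: coprimep_expl; apply: coprimep_expr.
  by rewrite coprimep_XsubC root_XsubC; apply: contra ji => /eqP /lam_inj ->.
have E1 := kermxpoly_prod A cop.
have dv : mxminpoly A %| \prod_(j in predT) ('X - (lam j)%:P) ^+ n.
  apply: dvdp_trans (mxminpoly_dvd_char A) _.
  rewrite charE -big_undup_iterop_count.
  rewrite (big_nth 0) big_mkord.
  apply: (big_ind2 (fun p q => p %| q)) => [|x1 x2 y1 y2 h1 h2|j _].
  - exact: dvdpp.
  - exact: dvdp_mul.
  rewrite -[iterop _ _ _ _]/(_ ^+ _); apply: dvdp_exp2l.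
  by rewrite -size_rts count_size.
have E2 := kermxpoly_min dv.
by rewrite -E2 E1.
Qed.
End Spec.

Lemma disj (K : fieldType) n (I : finType) (G : I -> 'M[K]_n) (Q : pred I) :
  mxdirect (\sum_i G i) ->
  ((\sum_(i | Q i) G i) :&: (\sum_(i | ~~ Q i) G i) = 0)%MS.
Proof.
move/mxdirectP => /= dx.
have := mxrank_sum_cap (\sum_(i | Q i) G i)%MS (\sum_(i | ~~ Q i) G i)%MS.
have E : (\sum_(i | Q i) G i + \sum_(i | ~~ Q i) G i)%MS = (\sum_i G i)%MS.
  by rewrite [RHS](bigID Q).
have E' : (\sum_(i | Q i) \rank (G i) + \sum_(i | ~~ Q i) \rank (G i) = \sum_i \rank (G i))%N.
  by rewrite [RHS](bigID Q).
rewrite E dx -E'.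
have h1 : (\rank (\sum_(i | Q i) G i)%MS <= \sum_(i | Q i) \rank (G i))%N.
  exact: (mxrank_sum_leqif _).1.
have h2 : (\rank (\sum_(i | ~~ Q i) G i)%MS <= \sum_(i | ~~ Q i) \rank (G i))%N.
  exact: (mxrank_sum_leqif _).1.
move=> H; apply/eqP; rewrite -mxrank_eq0.
by rewrite -leqn0 -(leq_add2l (\sum_(i | Q i) \rank (G i) + \sum_(i | ~~ Q i) \rank (G i))) addn0 H leq_add.
Qed.
Lemma idx_of (N : nat) (z : int) : (`|z|%N <= N)%N ->
  exists i : 'I_(N + N).+1, i%:Z - N%:Z = z.
Proof.
move=> hz.
have hi : (absz (z + N%:Z)%R < (N + N).+1)%N by lia.
exists (Ordinal hi) => /=; lia.
Qed.

Lemma big_abs (N : nat) (k : int) : (N%:Z < `|k|) -> (`|k|%N <= N)%N -> False.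
Proof. move=> h1 h2. lia. Qed.

Lemma sum_delta_int r (phi : 'I_r -> int) i :
  \sum_j (delta_mx 0 i : 'rV[int]_r) 0 j * phi j = phi i.
Proof.
rewrite (bigD1 i) //= big1 => [|j ji]; first by rewrite mxE !eqxx mul1r addr0.
by rewrite mxE (negPf ji) mul0r.
Qed.

Lemma sum_lin r (phi : 'I_r -> int) (m1 m2 : 'rV[int]_r) :
  \sum_j (m1 - m2) 0 j * phi j = \sum_j m1 0 j * phi j - \sum_j m2 0 j * phi j.
Proof. by rewrite -sumrB; apply: eq_bigr => j _; rewrite !mxE mulrBl. Qed.

Lemma sum_lin2 r (phi : 'I_r -> int) (m1 m2 : 'rV[int]_r) :
  \sum_j (m1 + m2) 0 j * phi j = \sum_j m1 0 j * phi j + \sum_j m2 0 j * phi j.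
Proof. by rewrite -big_split; apply: eq_bigr => j _; rewrite !mxE mulrDl. Qed.


Section Main.
Variables (n' : nat) (c : 'I_n'.+1 -> 'I_n'.+1 -> 'rV[rat]_n'.+1) (f : 'M[rat]_n'.+1).
Hypothesis aut : is_lie_aut c f.
Local Notation n := n'.+1.
Local Notation A := (map_mx (ratr : rat -> algC) f).
Local Notation R := (@r n' A).
Local Notation LAM := (@lam n' A).

Lemma lam0 j : LAM j != 0.
Proof.
apply/eqP => e; have := @lam_eig n' A j; rewrite e /eigenvalue /eigenspace.
rewrite raddf0 subr0 kermx_eq0 row_free_unit map_unitmx.
by case: aut => ->.
Qed.

Lemma phi_ex : exists phi : 'I_R -> int,
  (forall i j k, LAM i * LAM j = LAM k -> phi k = phi i + phi j) /\
  (forall i, phi i = 0 -> is_root_of_unity (LAM i)).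
Proof.
pose T := ('I_R * 'I_R * 'I_R)%type.
pose g (t : T) : 'rV[int]_R :=
  if LAM t.1.1 * LAM t.1.2 == LAM t.2
  then delta_mx 0 t.1.1 + delta_mx 0 t.1.2 - delta_mx 0 t.2 else 0.
have gev t : ev LAM (g t) = 1.
  rewrite /g; case: ifP => [/eqP e|_]; last exact: ev0.
  rewrite !ev_add; try exact: lam0.
  have -> : - delta_mx 0 t.2 = (-1) *: (delta_mx 0 t.2 : 'rV[int]_R) by rewrite scaleN1r.
  rewrite ev_scale.
  rewrite !ev_delta exprN1 e mulfV //.
  by rewrite -e mulf_neq0 ?lam0.
have [phi [Hg Hphi]] := phi_exists lam0 gev.
exists phi; split => // i j k e.
have := Hg (i, j, k); rewrite /g /= e eqxx sum_lin sum_lin2 !sum_delta_int //.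
by move/eqP; rewrite subr_eq0 => /eqP ->.
Qed.


Local Notation G j := (geigenspace A (LAM j)).

Lemma dxG : mxdirect (\sum_(j < R) G j).
Proof. by apply: mxdirect_sum_geigenspace => i j _ _; apply: lam_inj. Qed.

Lemma construct : exists V : int -> 'M[algC]_n,
  is_grading c V /\ grading_invariant V A /\
  (forall (a : algC) (v : 'rV[algC]_n),
      v != 0 -> (v <= V 0)%MS -> v *m A = a *: v -> is_root_of_unity a) /\
  ((forall a : algC, eigenvalue A a -> ~ is_root_of_unity a) -> V 0 = 0).
Proof.
have HA := aut_ext (F := algC) aut.
have [phi [addphi Hphi]] := phi_ex.
pose N := (\max_(j < R) `|phi j|)%N.
have phiN j : (`|phi j| <= N)%N by apply: (leq_bigmax j).
pose V k := (\sum_(j | phi j == k) G j)%MS.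
exists V; split; [|split; [|split]].
- exists N; split; [|split; [|split]].
  + move=> k hk; rewrite /V big_pred0 // => j; apply/negbTE/eqP => e.
    by apply: (big_abs hk); rewrite -e phiN.
  + apply/andP; split; first exact: submx1.
    apply: submx_trans (full A) _.
    apply/sumsmx_subP => j _.
    have [i hi] := idx_of (phiN j).
    apply: (sumsmx_sup i) => //; rewrite hi /V.
    by apply: (sumsmx_sup j).
  + apply/mxdirect_sumsP => i _.
    apply/eqP; rewrite -submx0.
    rewrite -[X in (_ <= X)%MS](disj (fun j => phi j == i%:Z - N%:Z) dxG).
    apply: capmxS; first exact: submx_refl.
    apply/sumsmx_subP => i' /andP [_ ne].
    apply/sumsmx_subP => j /eqP ej.
    apply: (sumsmx_sup j) => //; rewrite ej.
    apply: contra ne => /eqP h; apply/eqP/val_inj => /=.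
    by move: h => /eqP; rewrite (can_eq (addrK _)) => /eqP [].
  + move=> k l u v /sub_sumsmxP [wu ->] /sub_sumsmxP [wv ->].
    rewrite lbr_suml; apply: summx_sub => j /eqP ej.
    rewrite lbr_sumr; apply: summx_sub => j' /eqP ej'.
    set x := wu j *m _; set y := wv j' *m _.
    have hx : x *m (A - (LAM j)%:M) ^+ n = 0.
      by apply/sub_kermxP; rewrite -geigenspaceE submxMl.
    have hy : y *m (A - (LAM j')%:M) ^+ n = 0.
      by apply/sub_kermxP; rewrite -geigenspaceE submxMl.
    have hb := gen_lbr HA (erefl (n + n)%N) hx hy.
    have hk : (lbr c x y <= geigenspace A (LAM j * LAM j'))%MS.
      by apply: submx_trans (stab _ _ _); apply/sub_kermxP; exact: hb.
    case: (boolP (eigenvalue A (LAM j * LAM j'))) => [ev|nev].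
      have [k0 ek0] := eig_lam ev.
      apply: submx_trans hk _; rewrite -ek0; apply: (sumsmx_sup k0) => //.
      by rewrite (addphi j j' k0 (esym ek0)) ej ej'.
    have : geigenspace A (LAM j * LAM j') = 0.
      apply/eqP; rewrite geigenspaceE kermx_eq0 row_free_unit unitrX //.
      by rewrite -row_free_unit -kermx_eq0; move: nev; rewrite /eigenvalue /eigenspace negbK.
    by move=> e; move: hk; rewrite e submx0 => /eqP ->; apply: sub0mx.
- move=> k; rewrite /V sumsmxMr.
  apply/sumsmx_subP => j ej; apply: (sumsmx_sup j) => //.
  exact: comm_mx_stable_geigenspace.
- move=> a v v0 hv hav.
  have eva : eigenvalue A a by apply/eigenvalueP; exists v.
  have [j ej] := eig_lam eva.
  have [pj0|pj0] := eqVneq (phi j) 0; first by rewrite -ej; apply: Hphi.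
  exfalso; move/negP: v0; apply; rewrite -submx0.
  move/mxdirect_sumsP: (dxG) => /(_ j isT) <-.
  rewrite sub_capmx; apply/andP; split.
    by apply: submx_trans (eigenspace_sub_geigen _ _); apply/eigenspaceP; rewrite ej.
  apply: submx_trans hv _; apply/sumsmx_subP => j0 /eqP e0.
  apply: (sumsmx_sup j0) => //=; apply: contraNneq pj0 => e; by rewrite -e e0.
- move=> H; rewrite /V big_pred0 // => j; apply/negbTE/eqP => pj.
  exact: (H (LAM j) (lam_eig j) (Hphi j pj)).
Qed.
End Main.


Theorem lemma8 (n : nat) (c : 'I_n -> 'I_n -> 'rV[rat]_n) (f : 'M[rat]_n) :
  is_lie c -> is_lie_aut c f ->
  (exists V : int -> 'M[algC]_n,
      is_grading c V /\ grading_invariant V (map_mx ratr f) /\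
      (forall (a : algC) (v : 'rV[algC]_n),
          v != 0 -> (v <= V 0)%MS -> v *m map_mx ratr f = a *: v ->
          is_root_of_unity a))
  /\
  ((forall a : algC, eigenvalue (map_mx ratr f) a -> ~ is_root_of_unity a) ->
   exists V : int -> 'M[algC]_n, is_grading c V /\ very_special V).
Proof.
move=> _; case: n c f => [|n'] c f aut.
  have G0 : is_grading c (fun _ : int => 0 : 'M[algC]_0).
    exists 0%N; split; [done|split; [|split]].
    - by apply/andP; split; rewrite [X in (X <= _)%MS]thinmx0 sub0mx.
    - rewrite mxdirectE /=.
      rewrite [X in \rank X]thinmx0 mxrank0 big1 // => i _; exact: mxrank0.
    - by move=> k l u v _ _; rewrite [lbr _ _ _]thinmx0 sub0mx.
  split.
    exists (fun _ => 0); split; first exact: G0.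
    split; first by move=> k; rewrite mul0mx submx_refl.
    by move=> a v; rewrite thinmx0 eqxx.
  by move=> _; exists (fun _ => 0); split.
have [V [HV [HI [H0 H2]]]] := construct aut.
split; first by exists V.
by move=> H; exists V; split => //; apply: H2.
Qed.
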